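(* There exist a nondeterministic planning domain $D$, a finite-state policy $f$, and an LTL$_f$ formula $\psi$ such that $(D,f)\models A^{=1}(\psi)$, but there is no policy $g$ with $(D,g)\models A^{\text{sa-fair}}(\psi)$.
   Context: A nondeterministic planning domain is a tuple $D=(St,Act,s_0,Tr)$ with $St=2^{\mathcal{F}}$ a finite set of states (assignments to Boolean fluents $\mathcal{F}$), $Act=2^{\mathcal{A}}$ a finite set of actions, initial state $s_0$, and transition relation $Tr\subseteq St\times Act\times St$; every state has an applicable action ($a$ is applicable in $s$ if some $(s,a,s')\in Tr$). A trace is a finite or infinite sequence $(s_0\cup a_0)(s_1\cup a_1)\cdots$ over $2^{\mathcal{F}\cup\mathcal{A}}$ starting at $s_0$ with $(s_{i-1},a_{i-1},s_i)\in Tr$. A policy is a function $f:St^+\to Act$ with $f(u)$ applicable in the last state of $u$; a trace is an $f$-trace if $f(s_0\cdots s_i)=a_i$ for every prefix; a finite-state policy is one computed by a finite-state input/output automaton. LTL$_f$ is LTL (atoms, $\neg$, $\wedge$, next $X$, until $U$) interpreted over finite sequences over $2^{\mathcal{F}\cup\mathcal{A}}$, where $X\psi$ holds at $j$ only if $j+1$ is a position of the sequence; an infinite trace satisfies an LTL$_f$ formula if some finite prefix does. An infinite trace is state-action fair if for every $(s,a,s')\in Tr$, if $s,a$ occurs infinitely often then $s,a$ immediately followed by $s'$ occurs infinitely often. $(D,f)\models A^{\text{sa-fair}}\psi$ means every infinite state-action fair $f$-trace satisfies $\psi$. $(D,f)\models A^{=1}\psi$ means that, in any stochastic domain whose transition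 distributions $Pr(s,a)$ have support exactly $Tr(s,a)$, the infinite $f$-traces satisfying $\psi$ have probability $1$ under the Markov chain induced by $D$ and $f$ (this is independent of the choice of such probabilities). *)

(* Defs.v *)
From HB Require Import structures.
From mathcomp Require Import all_boot all_order all_algebra.
From mathcomp Require Import Rstruct.

Set Implicit Arguments.
Unset Strict Implicit.
Unset Printing Implicit Defensive.

Import Order.TTheory GRing.Theory Num.Theory.

Record domain := Domain {
  fluent : finType;
  atomact : finType;
  init : {set fluent};
  trans : {set fluent} -> {set atomact} -> {set fluent} -> bool;
  trans_total : forall s, exists a s', trans s a s' }.

Definition state (D : domain) := {set fluent D}.
Definition action (D : domain) := {set atomact D}.

Definition applicable (D : domain) (s : state D) (a : action D) : Prop :=
  exists s', trans s a s'.

(* A policy maps nonempty histories s_0 ... s_i (given as s_0 :: [s_1;...;s_i])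
   to actions; its value on the empty sequence is irrelevant. *)
Definition policy (D : domain) := seq (state D) -> action D.

Definition is_policy (D : domain) (f : policy D) : Prop :=
  forall (s : state D) (u : seq (state D)), applicable (last s u) (f (s :: u)).

Definition hist (T : Type) (x : nat -> T) (i : nat) : seq T :=
  [seq x k | k <- iota 0 i.+1].

(* infinite trace (s_0 u a_0)(s_1 u a_1)... given by st and ac *)
Definition is_trace (D : domain) (st : nat -> state D) (ac : nat -> action D) : Prop :=
  st 0 = init D /\ forall i, trans (st i) (ac i) (st i.+1).

Definition is_f_trace (D : domain) (f : policy D)
    (st : nat -> state D) (ac : nat -> action D) : Prop :=
  is_trace st ac /\ forall i, ac i = f (hist st i).

Fixpoint fsm_out (Q I O : Type) (delta : Q -> I -> Q) (out : Q -> I -> O)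
    (q : Q) (s : I) (u : seq I) : O :=
  match u with
  | [::] => out q s
  | s' :: u' => fsm_out delta out (delta q s) s' u'
  end.

Definition finite_state (D : domain) (f : policy D) : Prop :=
  exists (Q : finType) (q0 : Q) (delta : Q -> state D -> Q)
         (out : Q -> state D -> action D),
    forall (s : state D) (u : seq (state D)), f (s :: u) = fsm_out delta out q0 s u.

Inductive ltlf (AP : Type) :=
  | LAtom of AP
  | LNot of ltlf AP
  | LAnd of ltlf AP & ltlf AP
  | LNext of ltlf AP
  | LUntil of ltlf AP & ltlf AP.

(* holds L n phi j : the finite sequence of length n with labelling L
   (positions 0..n-1) satisfies phi at position j *)
Fixpoint holds (AP : Type) (L : nat -> AP -> bool) (n : nat) (phi : ltlf AP)
    (j : nat) : bool :=
  match phi with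
  | LAtom p => L j p
  | LNot p => ~~ holds L n p j
  | LAnd p q => holds L n p j && holds L n q j
  | LNext p => (j.+1 < n) && holds L n p j.+1
  | LUntil p q =>
      [exists k : 'I_n, (j <= k) && holds L n q k &&
         [forall i : 'I_n, ((j <= i) && (i < k)) ==> holds L n p i]]
  end.

Definition sat_fin (AP : Type) (L : nat -> AP -> bool) (n : nat) (phi : ltlf AP) : bool :=
  (0 < n) && holds L n phi 0.

Definition atom (D : domain) := (fluent D + atomact D)%type.

Definition lab (D : domain) (st : nat -> state D) (ac : nat -> action D)
    (j : nat) (p : atom D) : bool :=
  match p with
  | inl x => x \in st j
  | inr y => y \in ac j
  end.

Definition inf_sat (D : domain) (st : nat -> state D) (ac : nat -> action D)
    (psi : ltlf (atom D)) : Prop :=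
  exists n, sat_fin (lab st ac) n psi.

Definition sa_fair (D : domain) (st : nat -> state D) (ac : nat -> action D) : Prop :=
  forall s a s', trans s a s' ->
    (forall N, exists i, N <= i /\ st i = s /\ ac i = a) ->
    (forall N, exists i, N <= i /\ st i = s /\ ac i = a /\ st i.+1 = s').

Definition A_safair (D : domain) (g : policy D) (psi : ltlf (atom D)) : Prop :=
  forall st ac, is_f_trace g st ac -> sa_fair st ac -> inf_sat st ac psi.

Local Open Scope ring_scope.

Definition stoch (D : domain) (P : state D -> action D -> state D -> Rdefinitions.R) : Prop :=
  forall s a, applicable s a ->
    (forall s', 0 <= P s a s') /\
    (forall s', (0 < P s a s') <-> trans s a s') /\
    \sum_(s' : state D) P s a s' = 1.

Definition path_of (D : domain) (n : nat) (x : {ffun 'I_n.+1 -> state D}) : nat -> state D :=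
  fun k => x (inord k).

(* probability, in the Markov chain induced by D, P and f, of the event
   "some prefix of length <= n+1 of the f-trace satisfies psi"; this event
   only depends on s_0..s_n, so it is a finite union of cylinders. *)
Definition prob_by (D : domain) (f : policy D)
    (P : state D -> action D -> state D -> Rdefinitions.R)
    (psi : ltlf (atom D)) (n : nat) : Rdefinitions.R :=
  \sum_(x : {ffun 'I_n.+1 -> state D} |
          (x ord0 == init D) &&
          [exists m : 'I_n.+2,
             sat_fin (lab (path_of x) (fun j => f (hist (path_of x) j))) m psi])
    \prod_(i < n) P (path_of x i) (f (hist (path_of x) i)) (path_of x i.+1).

(* (D,f) |= A^{=1} psi : for every stochastic version of D, the probability that
   the f-trace satisfies psi (the increasing limit of prob_by n) equals 1. *)
Definition A_eq1 (D : domain) (f : policy D) (psi : ltlf (atom D)) : Prop :=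
  forall P, stoch P ->
    forall eps : Rdefinitions.R, 0 < eps -> exists n, 1 - eps <= prob_by f P psi n.

(* Main.v *)
Require Import Defs.
From mathcomp Require Import all_boot all_order all_algebra.
From mathcomp Require Import Rstruct lra.
From Stdlib Require Reals.

Set Implicit Arguments.
Unset Strict Implicit.
Unset Printing Implicit Defensive.
Import Order.TTheory GRing.Theory Num.Theory.

Lemma D0_total (s : {set unit}) :
  exists (a : {set void}) (s' : {set unit}), (fun _ _ _ => true) s a s'.
Proof. by exists set0, set0. Qed.

Definition D0 : domain := @Domain unit void set0 (fun _ _ _ => true) D0_total.

Definition f0 : policy D0 := fun _ => set0.

Fixpoint per (i : nat) : bool :=
  match i with 0 => false | 1 => false | S (S i') => ~~ per i' end.

Lemma per4 k N : per (4 * N + k) = per k.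
Proof.
elim: N => [|N IH] //. by rewrite mulnS !addSn /= negbK.
Qed.

Definition stw (i : nat) : state D0 := if per i then setT else set0.

Lemma set_unit (s : {set unit}) : s = if tt \in s then setT else set0.
Proof. apply/setP => -[]; case: ifP => H; by rewrite ?inE. Qed.

Lemma act_unique (a b : action D0) : a = b.
Proof. by apply/setP => -[]. Qed.

Definition hA : ltlf (atom D0) := LAtom (inl tt).
Definition ltrue : ltlf (atom D0) := LNot (LAnd hA (LNot hA)).
Definition lor (p q : ltlf (atom D0)) := LNot (LAnd (LNot p) (LNot q)).
Definition liff (p q : ltlf (atom D0)) :=
  LAnd (LNot (LAnd p (LNot q))) (LNot (LAnd q (LNot p))).
Definition psi0 : ltlf (atom D0) :=
  lor (LNext hA) (LUntil ltrue (LAnd (LNext (LNext ltrue)) (liff hA (LNext (LNext hA))))).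

Lemma holds_psi0 (L : nat -> atom D0 -> bool) n :
  holds L n psi0 0 =
  ((1 < n) && L 1 (inl tt)) ||
  [exists k : 'I_n, (k.+2 < n) && (L k (inl tt) == L k.+2 (inl tt))].
Proof.
rewrite /= negb_and !negbK.
congr (_ || _).
apply/existsP/existsP => -[k Hk]; exists k; move: Hk.
  case: (ltnP k.+2 n) => H; first last.
    by rewrite /= !andbF.
  rewrite (ltnW H) /=.
  by case: (L k _); case: (L k.+2 _).
case/andP => H; rewrite H (ltnW H) /=.
move/eqP => E; rewrite E; case: (L k.+2 _) => /=; apply/forallP => i; apply/implyP => _;
  by case: (L i _).
Qed.

Lemma stw_in i : (tt \in stw i) = per i.
Proof. by rewrite /stw; case: (per i); rewrite inE. Qed.

Lemma per_SS i : per i.+2 = ~~ per i.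
Proof. by []. Qed.

Lemma no_g : ~ (exists g : policy D0, is_policy g /\ A_safair g psi0).
Proof.
case=> g [_ Hg].
have Hf : sa_fair stw (fun i => g (hist stw i)).
  move=> s a s' _ _ N.
  rewrite (set_unit s) (set_unit s').
  have key : forall b b' : bool, exists k, per k = b /\ per k.+1 = b'.
    by case; case; [exists 2 | exists 3 | exists 1 | exists 0].
  have [k [E1 E2]] := key (tt \in s) (tt \in s').
  exists (4 * N + k); split.
    by apply: leq_trans (leq_addr k _); rewrite leq_pmull.
  split; last split; first by rewrite /stw per4 E1.
    exact: act_unique.
  by rewrite /stw -addnS per4 E2.
have [n Hn] := Hg stw (fun i => g (hist stw i)) (conj (conj erefl (fun _ => isT)) (fun _ => erefl)) Hf.
move: Hn; rewrite /sat_fin holds_psi0 /lab /= stw_in /= andbF /=.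
case/andP => _ /existsP [k /andP [_]]; by rewrite !stw_in per_SS; case: (per k).
Qed.

Local Open Scope ring_scope.
Notation RR := Rdefinitions.R.

Section Total.
Variable S : finType.

Definition fcons n (s : S) (y : {ffun 'I_n.+1 -> S}) : {ffun 'I_n.+2 -> S} :=
  [ffun i => if unlift ord0 i is Some j then y j else s].
Definition ftail n (x : {ffun 'I_n.+2 -> S}) : {ffun 'I_n.+1 -> S} :=
  [ffun j => x (lift ord0 j)].

Lemma fcons0 n s (y : {ffun 'I_n.+1 -> S}) : fcons s y ord0 = s.
Proof. by rewrite ffunE unlift_none. Qed.

Lemma ftailK n s (y : {ffun 'I_n.+1 -> S}) : ftail (fcons s y) = y.
Proof. by apply/ffunP => j; rewrite !ffunE liftK. Qed.

Lemma fconsK n (x : {ffun 'I_n.+2 -> S}) : fcons (x ord0) (ftail x) = x.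
Proof.
apply/ffunP => i; rewrite !ffunE; case: (unliftP ord0 i) => [j ->|->] //.
by rewrite ffunE.
Qed.

Lemma inord_lift n k : (k <= n)%N -> (inord k.+1 : 'I_n.+2) = lift ord0 (inord k : 'I_n.+1).
Proof.
move=> Hk; apply: val_inj; rewrite /= /bump /= add1n !inordK //.
Qed.

Lemma total (Q : S -> S -> RR) : (forall s, \sum_s' Q s s' = 1) ->
  forall n s, \sum_(x : {ffun 'I_n.+1 -> S} | x ord0 == s)
     \prod_(i < n) Q (x (inord i)) (x (inord i.+1)) = 1.
Proof.
move=> HQ; elim=> [|n IH] s.
  rewrite (big_pred1 [ffun => s]) ?big_ord0 // => x /=.
  apply/eqP/eqP => [E|->]; last by rewrite ffunE.
  by apply/ffunP => i; rewrite ffunE ord1.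
rewrite (reindex_onto (fcons s) (@ftail n)); last by move=> x /eqP <-; exact: fconsK.
rewrite (eq_bigl xpredT); last by move=> y; rewrite fcons0 ftailK !eqxx.
rewrite (partition_big (fun y : {ffun 'I_n.+1 -> S} => y ord0) xpredT) //=.
transitivity (\sum_z Q s z); last exact: HQ s.
apply: eq_bigr => z _.
transitivity (Q s z * \sum_(x : {ffun 'I_n.+1 -> S} | x ord0 == z) \prod_(i<n) Q (x (inord i)) (x (inord i.+1))); last by rewrite IH mulr1.
rewrite mulr_sumr; apply: eq_bigr => y /eqP Ez.
rewrite big_ord_recl; congr (_ * _).
  have -> : (inord 0 : 'I_n.+2) = ord0 by apply: val_inj; rewrite /= inordK.
  by rewrite fcons0 (inord_lift (leq0n n)) ffunE liftK -Ez; congr (Q _ (y _)); apply: val_inj; rewrite /= inordK.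
apply: eq_bigr => i _.
rewrite /= !(inord_lift (ltnW (ltn_ord i))) (inord_lift (ltn_ord i)) -!lift0 !ffunE !liftK.
done.
Qed.
End Total.

Lemma pow_small (c eps : RR) : 0 <= c -> c < 1 -> 0 < eps -> exists n, c ^+ n <= eps.
Proof.
move=> c0 c1 e0.
have c0' : Rdefinitions.Rle 0 c by apply/RleP.
have [N HN] := Rfunctions.pow_lt_1_zero c
  (ltac:(rewrite Rbasic_fun.Rabs_pos_eq //; exact/RltP)) eps (ltac:(exact/RltP)).
exists N; have := HN N (le_n N).
rewrite Rbasic_fun.Rabs_pos_eq; last by apply/RleP; rewrite RpowE exprn_ge0.
by rewrite RpowE => /RltP /ltW.
Qed.

Definition wn n : {ffun 'I_n.+1 -> state D0} := [ffun i : 'I_n.+1 => stw i].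

Lemma bad_unique n (x : {ffun 'I_n.+1 -> state D0}) :
  x ord0 == init D0 ->
  ~~ [exists m : 'I_n.+2, sat_fin (lab (path_of x) (fun j => f0 (hist (path_of x) j))) m psi0] ->
  x = wn n.
Proof.
move=> /eqP x0 /existsPn /(_ ord_max).
rewrite /sat_fin holds_psi0 /= /lab negb_or => /andP [H1 /existsPn H2].
have claim : forall i, (i <= n)%N -> (tt \in x (inord i)) = per i /\
    ((i.+1 <= n)%N -> (tt \in x (inord i.+1)) = per i.+1).
  elim=> [|i IH] Hi.
    split.
      have -> : (inord 0 : 'I_n.+1) = ord0 by apply: val_inj; rewrite /= inordK.
      by rewrite x0 inE.
    move=> H1n; move: H1; rewrite /path_of.
    by rewrite (leq_ltn_trans H1n (ltnSn n)) /=; case: (tt \in _).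
  have [_ IH2] := IH (ltnW Hi).
  split; first exact: IH2.
  move=> Hi2.
  have [IH1 _] := IH (ltnW (ltnW Hi2)).
  have := H2 (inord i); rewrite /path_of inordK; last by rewrite ltnS (ltnW (ltnW Hi2)).
  rewrite ltnS Hi2 /=. rewrite -IH1.
  by case: (tt \in x (inord i)); case: (tt \in x (inord i.+2)).
apply/ffunP => i; rewrite ffunE.
have [E _] := claim i (ltn_ord i); move: E; rewrite inord_val => E.
by rewrite (set_unit (x i)) E /stw.
Qed.

Lemma setC_neq (s : {set unit}) : ~: s != s.
Proof.
apply/negP => /eqP /setP /(_ tt); rewrite inE.
by case: (tt \in s).
Qed.

Lemma aeq1 : A_eq1 f0 psi0.
Proof.
move=> P HP eps Heps.
pose Q (s s' : state D0) := P s set0 s'.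
have app : forall s : state D0, applicable s set0 by move=> s; exists set0.
have Q0 : forall s s', 0 <= Q s s'.
  by move=> s s'; have [H _] := HP s set0 (app s); exact: H.
have Qp : forall s s', 0 < Q s s'.
  by move=> s s'; have [_ [H _]] := HP s set0 (app s); apply/H.
have Q1 : forall s, \sum_s' Q s s' = 1.
  by move=> s; have [_ [_ H]] := HP s set0 (app s).
pose mm := Num.min (Num.min (Q set0 set0) (Q set0 setT)) (Num.min (Q setT set0) (Q setT setT)).
have mm0 : 0 < mm by rewrite /mm !lt_min !Qp.
have Qle : forall s s', Q s s' <= 1 - mm.
  move=> s s'.
  have H2 : Q s s' + Q s (~: s') <= 1.
    rewrite -(Q1 s) (bigD1 s') //= (bigD1 (~: s')) /=; last by rewrite setC_neq.
    have : 0 <= \sum_(i | (i != s') && (i != ~: s')) Q s i by apply: sumr_ge0.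
    lra.
  have H3 : mm <= Q s (~: s').
    rewrite (set_unit s) (set_unit (~: s')).
    by case: (tt \in s); case: (tt \in ~: s'); rewrite /mm !ge_min lexx ?orbT.
  lra.
have c0 : 0 <= 1 - mm by apply: le_trans (Qle set0 set0); exact: Q0.
have c1 : 1 - mm < 1 by lra.
have [n Hn] := pow_small c0 c1 Heps.
exists n.
have Tot := total Q1 n (init D0).
rewrite (bigID (fun x : {ffun 'I_n.+1 -> state D0} =>
   [exists m : 'I_n.+2, sat_fin (lab (path_of x) (fun j => f0 (hist (path_of x) j))) m psi0])) /= in Tot.
move: Tot; set A := \sum_(i | _) _; set G := \sum_(i | _) _ => Tot.
have HG : G <= (1 - mm) ^+ n.
  apply: (@le_trans _ _ (\prod_(i < n) Q (wn n (inord i)) (wn n (inord i.+1)))).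
    rewrite /G big_mkcond /= (bigD1 (wn n)) //=.
    rewrite [X in _ + X <= _]big1; last first.
      move=> x /negPf Hx; case: ifP => // /andP [H1 H2].
      by move: Hx; rewrite (bad_unique H1 H2) eqxx.
    rewrite addr0; case: ifP => _ //.
    by apply: prodr_ge0 => i _.
  have -> : (1 - mm) ^+ n = \prod_(i < n) (1 - mm) by rewrite prodr_const card_ord.
  by apply: ler_prod => i _; rewrite Q0 Qle.
change (1 - eps <= A).
lra.
Qed.

Lemma f0_pol : is_policy f0.
Proof. by move=> s u; exists set0. Qed.

Lemma f0_fin : finite_state f0.
Proof.
exists unit, tt, (fun _ _ => tt), (fun _ _ => set0).
move=> s u; rewrite /f0; elim: u s => // s1 u IH s /=; exact: IH.
Qed.

Theorem proposition3 :
  exists (D : domain) (f : policy D),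
    is_policy f /\ finite_state f /\
    exists psi : ltlf (atom D),
      A_eq1 f psi /\ ~ (exists g : policy D, is_policy g /\ A_safair g psi).
Proof.
exists D0, f0; split; first exact: f0_pol.
split; first exact: f0_fin.
exists psi0; split; [exact: aeq1 | exact: no_g].
Qed.
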